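(* Let $n\ge1$, let $\mathcal{S}$ be a discrete subgroup of $O(n+1)$ satisfying the spanning property, and let $f$ be an $\mathcal{S}$-invariant function on $\mathbb{S}^n$ with $c_1\le f\le c_2$ for positive constants $c_1,c_2$. For $p<-n-1$ let $h^{(p)}$ be the $\mathcal{S}$-invariant solution of $\det(\nabla^2h+hI)=fh^{p-1}$ on $\mathbb{S}^n$ that maximizes $V$ over $\mathcal{K}_p(\mathcal{S})$. Then $$\lim_{p\to-\infty}\min_{\mathbb{S}^n}h^{(p)}=1.$$
   Context: $\mathcal{K}_p(\mathcal{S})=\{\Omega\in\mathcal{K}_0(\mathcal{S}):\int_{\mathbb{S}^n}fh_\Omega^p=\int_{\mathbb{S}^n}f\}$, $\mathcal{K}_0(\mathcal{S})$ the $\mathcal{S}$-invariant convex bodies in $\mathbb{R}^{n+1}$ containing the origin, $h_\Omega$ the support function, $V(\Omega)=(n+1)|\Omega|$. Spanning property: for every $a\in\mathbb{S}^n$, $\mathrm{conv}\{\phi(a):\phi\in\mathcal{S}\}$ is a non-degenerate $(n+1)$-dimensional polytope. *)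

(* Defs.v *)
(* R : realType, points of R^(k) are row
   vectors 'rV[R]_k, linear maps are matrices acting by phi(x) := x *m phi^T. *)
From HB Require Import structures.
From mathcomp Require Import all_boot all_order all_algebra.
From mathcomp Require Import all_classical all_reals all_analysis.
Set Implicit Arguments.
Unset Strict Implicit.
Unset Printing Implicit Defensive.
Import Order.TTheory GRing.Theory Num.Theory.
Import numFieldNormedType.Exports.
Local Open Scope classical_set_scope.
Local Open Scope ring_scope.

Section Defs.
Variable R : realType.

Definition dotv k (x y : 'rV[R]_k) : R := \sum_(i < k) x 0 i * y 0 i.
Definition enorm k (x : 'rV[R]_k) : R := Num.sqrt (dotv x x).
Definition sphere k : set 'rV[R]_k := [set x | enorm x = 1].

Definition mact k (phi : 'M[R]_k) (x : 'rV[R]_k) : 'rV[R]_k := x *m phi^T.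

Definition is_orthogonal k (phi : 'M[R]_k) : Prop := phi *m phi^T = 1%:M.

(* S is a discrete subgroup of O(k): a subgroup of the orthogonal group all of
   whose elements are isolated points (for the topology of entrywise convergence) *)
Definition discrete_subgroup_O k (S : set 'M[R]_k) : Prop :=
  [/\ S 1%:M,
      (forall a b, S a -> S b -> S (a *m b)),
      (forall a, S a -> S (invmx a)),
      (forall a, S a -> is_orthogonal a) &
      (forall a, S a -> exists2 e : R, 0 < e &
         forall b, S b -> (forall i j, `|b i j - a i j| < e) -> b = a)].

Definition convhull k (A : set 'rV[R]_k) : set 'rV[R]_k :=
  [set x | exists m (w : 'I_m -> R) (pts : 'I_m -> 'rV[R]_k),
     [/\ forall i, 0 <= w i, \sum_(i < m) w i = 1,
         forall i, A (pts i) & x = \sum_(i < m) w i *: pts i]].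

(* spanning property: each orbit S.a (a on the sphere) has as convex hull a
   non-degenerate k-dimensional polytope (finite point set, nonempty interior) *)
Definition spanning k (S : set 'M[R]_k) : Prop :=
  forall a, sphere a ->
    finite_set [set mact phi a | phi in S] /\
    exists x, interior (convhull [set mact phi a | phi in S]) x.

Definition is_convex k (K : set 'rV[R]_k) : Prop :=
  forall x y (t : R), K x -> K y -> 0 <= t <= 1 -> K (t *: x + (1 - t) *: y).

Definition convex_body k (K : set 'rV[R]_k) : Prop :=
  [/\ compact K, is_convex K & exists x, interior K x].

Definition S_invariant_set k (S : set 'M[R]_k) (K : set 'rV[R]_k) : Prop :=
  forall phi, S phi -> [set mact phi x | x in K] = K.

Definition supp_h k (K : set 'rV[R]_k) (x : 'rV[R]_k) : R :=
  sup [set dotv x y | y in K].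

(* iterated Lebesgue integral of a nonnegative extended-real function on R^k
   (by Tonelli this is the integral against Lebesgue measure on R^k) *)
Fixpoint iint (k : nat) : ('rV[R]_k -> \bar R) -> \bar R :=
  match k return ('rV[R]_k -> \bar R) -> \bar R with
  | 0 => fun g => g 0
  | k'.+1 => fun g => (\int[@lebesgue_measure R]_t
                 iint (fun y : 'rV[R]_k' => g (row_mx (const_mx t : 'rV[R]_1) y)))%E
  end.

Definition lebvol k (K : set 'rV[R]_k) : \bar R := iint (fun x => (\1_K x)%:E).
Definition Vol k (K : set 'rV[R]_k) : \bar R := (k%:R%:E * lebvol K)%E.

(* integral over the unit sphere S^(k-1) w.r.t. its standard surface measure,
   via polar coordinates:  int_{S} g dsigma = k * int_{0<|x|<=1} g(x/|x|) dx *)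
Definition sph_int k (g : 'rV[R]_k -> \bar R) : \bar R :=
  (k%:R%:E * iint (fun x => if ((x != 0 :> 'rV[R]_k) && (enorm x <= 1))%R
                           then g ((enorm x)^-1 *: x) else 0%E))%E.

(* a^p for a >= 0 and p < 0, with the convention 0^p = +oo *)
Definition powe (a p : R) : \bar R := if 0 < a then (a `^ p)%:E else +oo%E.

Definition Kp k (S : set 'M[R]_k) (f : 'rV[R]_k -> R) (p : R)
    (K : set 'rV[R]_k) : Prop :=
  [/\ convex_body K, S_invariant_set S K, K 0 &
      sph_int (fun x => ((f x)%:E * powe (supp_h K x) p)%E)
      = sph_int (fun x => (f x)%:E)].

Definition V_maximizer k (S : set 'M[R]_k) (f : 'rV[R]_k -> R) (p : R)
    (K : set 'rV[R]_k) : Prop :=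
  Kp S f p K /\ forall L, Kp S f p L -> (Vol L <= Vol K)%E.

(* minimum of h over the sphere (attained for continuous h) *)
Definition sph_min k (h : 'rV[R]_k -> R) : R := inf [set h x | x in @sphere k].

Definition S_invariant_fun k (S : set 'M[R]_k) (f : 'rV[R]_k -> R) : Prop :=
  forall phi x, S phi -> sphere x -> f (mact phi x) = f x.

Definition rv_of_tuple k (t : k.-tuple R) : 'rV[R]_k := \row_i tnth t i.

Definition sphere_measurable k (f : 'rV[R]_k -> R) : Prop :=
  measurable_fun [set t : k.-tuple R | sphere (rv_of_tuple t)]
                 (fun t => f (rv_of_tuple t)).

End Defs.

(* Main.v *)
Require Import Defs.
From HB Require Import structures.
From mathcomp Require Import all_boot all_order all_algebra.
From mathcomp Require Import all_classical all_reals all_analysis.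
From mathcomp Require Import ring lra.
Set Implicit Arguments.
Unset Strict Implicit.
Unset Printing Implicit Defensive.
Import Order.TTheory GRing.Theory Num.Theory.
Import numFieldNormedType.Exports.
Local Open Scope classical_set_scope.
Local Open Scope ring_scope.

Section Euclid.
Variable R : realType.
Variable k : nat.
Implicit Types x y z : 'rV[R]_k.

Lemma dotvC x y : dotv x y = dotv y x.
Proof. by apply: eq_bigr => i _; rewrite mulrC. Qed.

Lemma dotvDr x y z : dotv x (y + z) = dotv x y + dotv x z.
Proof. by rewrite /dotv -big_split; apply: eq_bigr => i _; rewrite mxE mulrDr. Qed.

Lemma dotvDl x y z : dotv (y + z) x = dotv y x + dotv z x.
Proof. by rewrite dotvC dotvDr !(dotvC x). Qed.

Lemma dotvZr (c : R) x y : dotv x (c *: y) = c * dotv x y.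
Proof. by rewrite /dotv mulr_sumr; apply: eq_bigr => i _; rewrite mxE mulrCA. Qed.

Lemma dotvZl (c : R) x y : dotv (c *: x) y = c * dotv x y.
Proof. by rewrite dotvC dotvZr dotvC. Qed.

Lemma dotvNr x y : dotv x (- y) = - dotv x y.
Proof. by rewrite -scaleN1r dotvZr mulN1r. Qed.

Lemma dotvNl x y : dotv (- x) y = - dotv x y.
Proof. by rewrite dotvC dotvNr dotvC. Qed.

Lemma dotvBr x y z : dotv x (y - z) = dotv x y - dotv x z.
Proof. by rewrite dotvDr dotvNr. Qed.

Lemma dotvBl x y z : dotv (y - z) x = dotv y x - dotv z x.
Proof. by rewrite dotvDl dotvNl. Qed.

Lemma dotv0r x : dotv x 0 = 0.
Proof. by rewrite /dotv big1 // => i _; rewrite mxE mulr0. Qed.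

Lemma dotv0l x : dotv 0 x = 0.
Proof. by rewrite dotvC dotv0r. Qed.

Lemma dotv_ge0 x : 0 <= dotv x x.
Proof. by apply: sumr_ge0 => i _; rewrite -expr2 sqr_ge0. Qed.

Lemma dotv_eq0 x : dotv x x = 0 -> x = 0.
Proof.
move=> /eqP; rewrite psumr_eq0; last by move=> i _; rewrite -expr2 sqr_ge0.
move=> /allP H; apply/rowP => i; rewrite mxE.
have := H i (mem_index_enum i); rewrite /= -expr2 sqrf_eq0 => /eqP //.
Qed.

Lemma coord_sq_le x i : x 0 i ^+ 2 <= dotv x x.
Proof.
rewrite /dotv (bigD1 i) //= -expr2 lerDl; apply: sumr_ge0 => j _.
by rewrite -expr2 sqr_ge0.
Qed.

Lemma CS x y : dotv x y ^+ 2 <= dotv x x * dotv y y.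
Proof.
have [y0|yn0] := eqVneq (dotv y y) 0.
  rewrite (dotv_eq0 y0) !dotv0r; by rewrite expr2 !mulr0.
have ypos : 0 < dotv y y by rewrite lt_neqAle eq_sym yn0 dotv_ge0.
set t := dotv x y / dotv y y.
have := dotv_ge0 (x - t *: y).
rewrite dotvBl !dotvBr !dotvZl !dotvZr (dotvC y x).
have -> : dotv x x - t * dotv x y - (t * dotv x y - t * (t * dotv y y))
   = dotv x x - dotv x y ^+ 2 / dotv y y.
  rewrite /t; field; exact: yn0.
by rewrite subr_ge0 ler_pdivrMr // mulrC.
Qed.

Lemma enorm_ge0 x : 0 <= enorm x.
Proof. exact: sqrtr_ge0. Qed.

Lemma enorm_sq x : enorm x ^+ 2 = dotv x x.
Proof. by rewrite sqr_sqrtr // dotv_ge0. Qed.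

Lemma dotv_le x y : dotv x y <= enorm x * enorm y.
Proof.
have h : `|dotv x y| <= enorm x * enorm y.
  rewrite -(ler_pXn2r (_ : 0 < 2)%N) ?nnegrE ?mulr_ge0 ?enorm_ge0 //.
  by rewrite real_normK ?num_real // exprMn !enorm_sq CS.
exact: le_trans (ler_norm _) h.
Qed.

Lemma enormZ (c : R) x : enorm (c *: x) = `|c| * enorm x.
Proof.
by rewrite /enorm dotvZl dotvZr mulrA -expr2 sqrtrM ?sqr_ge0 // sqrtr_sqr.
Qed.

Lemma enormN x : enorm (- x) = enorm x.
Proof. by rewrite -scaleN1r enormZ normrN normr1 mul1r. Qed.

Lemma enorm_triangle x y : enorm (x + y) <= enorm x + enorm y.
Proof.
rewrite -(ler_pXn2r (_ : 0 < 2)%N) ?nnegrE ?addr_ge0 ?enorm_ge0 //.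
rewrite enorm_sq dotvDl !dotvDr (dotvC y x) sqrrD !enorm_sq.
have := dotv_le x y; lra.
Qed.

Lemma enorm_sub_le x y : enorm x - enorm y <= enorm (x - y).
Proof.
have := enorm_triangle (x - y) y; rewrite subrK; lra.
Qed.

Lemma enorm0 : enorm (0 : 'rV[R]_k) = 0.
Proof. by rewrite /enorm dotv0r sqrtr0. Qed.

Lemma enorm_eq0 x : enorm x = 0 -> x = 0.
Proof.
move=> h; apply: dotv_eq0; by rewrite -enorm_sq h expr0n.
Qed.

Lemma coord_le x i : `|x 0 i| <= enorm x.
Proof.
rewrite -(ler_pXn2r (_ : 0 < 2)%N) ?nnegrE ?enorm_ge0 //.
by rewrite real_normK ?num_real // enorm_sq coord_sq_le.
Qed.

Lemma enorm_coord_bound x (c : R) : 0 <= c -> (forall i, `|x 0 i| <= c) ->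
  enorm x <= k%:R * c.
Proof.
move=> c0 H.
rewrite -(ler_pXn2r (_ : 0 < 2)%N) ?nnegrE ?enorm_ge0 ?mulr_ge0 //.
rewrite enorm_sq.
have -> : (k%:R * c) ^+ 2 = k%:R * (k%:R * c ^+ 2).
  by rewrite exprMn expr2; ring.
have h1 : dotv x x <= k%:R * c ^+ 2.
  have h2 : dotv x x <= \sum_(i < k) c ^+ 2.
    apply: ler_sum => i _; rewrite -expr2 -real_normK ?num_real //.
    by rewrite lerXn2r ?nnegrE ?normr_ge0.
  by rewrite sumr_const card_ord -mulr_natl in h2.
case: k x H h1 => [|m] x H h1.
  by rewrite /dotv big_ord0 mul0r.
apply: (le_trans h1); rewrite ler_peMl ?mulr_ge0 ?sqr_ge0 //.
by rewrite ler1n.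
Qed.

Lemma sphere_normalize x : x != 0 -> sphere ((enorm x)^-1 *: x).
Proof.
move=> xn0; rewrite /sphere /= enormZ.
have hp : 0 < enorm x.
  rewrite lt_neqAle enorm_ge0 andbT; apply/eqP => /esym /enorm_eq0 h.
  by rewrite h eqxx in xn0.
by rewrite ger0_norm ?invr_ge0 ?enorm_ge0 // mulVf // gt_eqF.
Qed.


Lemma dotv_mx x y : dotv x y = (x *m y^T) 0 0.
Proof. by rewrite !mxE; apply: eq_bigr => i _; rewrite mxE. Qed.

Lemma mactD (phi : 'M[R]_k) x y : mact phi (x + y) = mact phi x + mact phi y.
Proof. by rewrite /mact mulmxDl. Qed.

Lemma mactZ (phi : 'M[R]_k) (c : R) x : mact phi (c *: x) = c *: mact phi x.
Proof. by rewrite /mact scalemxAl. Qed.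

Lemma mactM (phi psi : 'M[R]_k) x : mact phi (mact psi x) = mact (phi *m psi) x.
Proof. by rewrite /mact trmx_mul mulmxA. Qed.

Lemma mact1 x : mact 1%:M x = x.
Proof. by rewrite /mact trmx1 mulmx1. Qed.

Lemma mact_orth_dot (phi : 'M[R]_k) x y : Defs.is_orthogonal phi ->
  dotv (mact phi x) (mact phi y) = dotv x y.
Proof.
move=> /mulmx1C h; rewrite !dotv_mx /mact trmx_mul trmxK.
by rewrite mulmxA -[x *m trmx phi *m phi]mulmxA h mulmx1.
Qed.

Lemma enorm_mact (phi : 'M[R]_k) x : Defs.is_orthogonal phi ->
  enorm (mact phi x) = enorm x.
Proof. by move=> h; rewrite /enorm mact_orth_dot. Qed.

Lemma orth_dot_mulmx (phi : 'M[R]_k) x : Defs.is_orthogonal phi ->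
  dotv (x *m phi) (x *m phi) = dotv x x.
Proof.
move=> h; rewrite !dotv_mx trmx_mul mulmxA -[x *m phi *m trmx phi]mulmxA h mulmx1 //.
Qed.

Lemma mact_mulmx (phi : 'M[R]_k) x : Defs.is_orthogonal phi ->
  mact phi (x *m phi) = x.
Proof. by move=> h; rewrite /mact -mulmxA h mulmx1. Qed.

Lemma mact_sum (phi : 'M[R]_k) m (w : 'I_m -> R) (pts : 'I_m -> 'rV[R]_k) :
  mact phi (\sum_(i < m) w i *: pts i) = \sum_(i < m) w i *: mact phi (pts i).
Proof.
rewrite /mact mulmx_suml; apply: eq_bigr => i _; by rewrite scalemxAl.
Qed.

Lemma dotv_sumr x m (w : 'I_m -> R) (pts : 'I_m -> 'rV[R]_k) :
  dotv x (\sum_(i < m) w i *: pts i) = \sum_(i < m) w i * dotv x (pts i).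
Proof.
elim: m w pts => [|m IH] w pts; first by rewrite !big_ord0 dotv0r.
by rewrite !big_ord_recr /= dotvDr IH dotvZr.
Qed.

End Euclid.
Section IntLemmas.
Local Open Scope ereal_scope.
Context d (T : measurableType d) (R : realType).
Variable mu : {measure set T -> \bar R}.
Import HBNNSimple.

Lemma int_le (f g : T -> \bar R) : (forall x, 0 <= f x) -> (forall x, f x <= g x) ->
  \int[mu]_x f x <= \int[mu]_x g x.
Proof.
move=> f0 fg; have g0 : forall x, 0 <= g x by move=> x; exact: le_trans (f0 x) (fg x).
rewrite !ge0_integralTE //; apply: le_ereal_sup => _ [h /= hf <-].
by exists h => // x; exact: le_trans (hf x) (fg x).
Qed.

Lemma int_Zle (c : R) (f : T -> \bar R) : (0 <= c)%R -> (forall x, 0 <= f x) ->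
  \int[mu]_x (c%:E * f x) <= c%:E * \int[mu]_x f x.
Proof.
move=> c0 f0; have [->|cn0] := eqVneq c 0%R.
  rewrite mul0e; under eq_integral do rewrite mul0e.
  by rewrite integral0.
have cp : (0 < c)%R by rewrite lt_neqAle eq_sym cn0 c0.
have cf0 : forall x, 0 <= c%:E * f x by move=> x; rewrite mule_ge0 // lee_fin.
rewrite !ge0_integralTE //; apply: ge_ereal_sup => _ [h /= hf <-].
have ci0 : (0 <= c^-1)%R by rewrite invr_ge0.
pose h' := scale_nnsfun h ci0.
have E : sintegral mu h = c%:E * sintegral mu h'.
  rewrite /h' /scale_nnsfun /= sintegralrM muleA -EFinM mulfV ?mul1e //.
rewrite E lee_pmul2l ?lte_fin //; apply: ereal_sup_ubound; exists h' => //= x.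
have := hf x; rewrite /h' /= /scale_nnsfun /=.
have := f0 x; case: (f x) => [r| |] //=.
  rewrite !lee_fin => _ hr.
  by rewrite -(ler_pM2l cp) mulrA mulfV ?mul1r // gt_eqF.
by move=> _ _; rewrite leey.
Qed.
End IntLemmas.

Section Box.
Variable R : realType.
Definition box k (a : 'rV[R]_k) (s : R) : set 'rV[R]_k :=
  [set x | forall i, (a 0 i <= x 0 i <= a 0 i + s)%R].

Lemma box_split k (a : 'rV[R]_(1 + k)) s t (y : 'rV[R]_k) :
  box a s (row_mx (const_mx t : 'rV[R]_1) y) <->
  ((lsubmx a) ord0 ord0 <= t <= (lsubmx a) ord0 ord0 + s)%R /\ box (rsubmx a) s y.
Proof.
split.
  move=> H; split.
    have := H (lshift k ord0); rewrite row_mxEl mxE.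
    by rewrite (_ : lsubmx a ord0 ord0 = a 0 (lshift k ord0)) // mxE.
  move=> j; have := H (rshift 1 j); rewrite row_mxEr mxE //.
move=> [H1 H2] i; case: (split_ordP i) => j ->.
  rewrite row_mxEl mxE; have -> : j = ord0 by apply/val_inj; case: j => [[]].
  by move: H1; rewrite mxE.
by rewrite row_mxEr; move: (H2 j); rewrite mxE.
Qed.

End Box.

Section Iint.
Variable R : realType.
Local Open Scope ereal_scope.

Lemma iint_ge0 k (g : 'rV[R]_k -> \bar R) : (forall x, 0 <= g x) -> 0 <= iint g.
Proof.
elim: k g => [|k IH] g g0 /=; first exact: g0.
by apply: integral_ge0 => t _; apply: IH => y; apply: g0.
Qed.

Lemma iint_le k (g1 g2 : 'rV[R]_k -> \bar R) : (forall x, 0 <= g1 x) ->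
  (forall x, g1 x <= g2 x) -> iint g1 <= iint g2.
Proof.
elim: k g1 g2 => [|k IH] g1 g2 g0 g12 /=; first exact: g12.
apply: int_le => t; first by apply: iint_ge0 => y; apply: g0.
by apply: IH => y; [apply: g0|apply: g12].
Qed.

Lemma iint_Zle k (c : R) (g : 'rV[R]_k -> \bar R) : (0 <= c)%R ->
  (forall x, 0 <= g x) -> iint (fun x => c%:E * g x) <= c%:E * iint g.
Proof.
elim: k g => [|k IH] g c0 g0 /=; first by [].
apply: le_trans (int_Zle _ c0 _); last by move=> t; apply: iint_ge0.
apply: int_le => t.
  by apply: iint_ge0 => y; rewrite mule_ge0 // lee_fin.
exact: IH.
Qed.

Lemma iint_box k (a : 'rV[R]_k) (s C : R) : (0 < s)%R -> (0 <= C)%R ->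
  iint (fun x => (C * \1_(box a s) x)%:E) = (C * s ^+ k)%:E.
Proof.
elim: k a C => [|k IH] a C s0 C0 /=.
  rewrite indicE mem_set ?expr0 // => i; case: i => [] //.
pose a' : 'rV[R]_(1 + k) := a.
transitivity (\int[lebesgue_measure]_t
   ((C * s ^+ k) * \1_(`[(lsubmx a') ord0 ord0, (lsubmx a') ord0 ord0 + s]%classic) t)%:E).
  apply: eq_integral => t _.
  transitivity (iint (fun y : 'rV[R]_k =>
     ((C * \1_(`[(lsubmx a') ord0 ord0, (lsubmx a') ord0 ord0 + s]%classic) t)
       * \1_(box (rsubmx a') s) y)%:E)).
    congr iint; apply: funext => y; congr EFin.
    rewrite -mulrA; congr (C * _)%R.
    have := box_split a' s t y; rewrite /a' => BS.
    case: (pselect (box a s (row_mx (const_mx t : 'rV[R]_1) y))) => h.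
      have [h1 h2] := BS.1 h.
      rewrite !indicE !mem_set ?mulr1 //= in_itv /= h1 //.
    rewrite !indicE (memNset h).
    case: (pselect (box (rsubmx a') s y)) => h2; last by rewrite (memNset h2) mulr0.
    case: (pselect ([set` `[(lsubmx a') ord0 ord0, (lsubmx a') ord0 ord0 + s]%R] t)) => h1.
      by exfalso; apply: h; apply: BS.2; split => //; move: h1 => /=; rewrite in_itv.
    by rewrite (memNset h1) mul0r.
  rewrite IH //; first by congr EFin; ring.
  by rewrite mulr_ge0 // indicE ler0n.
under eq_integral do rewrite EFinM.
rewrite ge0_integralZl_EFin //; last 2 first.
- by apply/(measurable_realfun.measurable_EFinP _ (\1_ _)); exact: measurable_realfun.measurable_indic.
- by rewrite mulr_ge0 // exprn_ge0 // ltW.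
rewrite integral_indic // setIT.
set l := lsubmx a' ord0 ord0.
have L := @lebesgue_measure_itv R `[l, l + s]%R.
rewrite /= lte_fin ltrDl s0 -EFinB addrAC subrr add0r in L.
rewrite [X in _ * X]L.
by rewrite -EFinM exprSr mulrA.
Qed.

End Iint.

Section SphInt.
Variable R : realType.
Variable k : nat.
Implicit Types (x y : 'rV[R]_k) (F : 'rV[R]_k -> \bar R).

Definition GF (F : 'rV[R]_k -> \bar R) (x : 'rV[R]_k) : \bar R :=
  if ((x != 0 :> 'rV[R]_k) && (enorm x <= 1))%R
  then F ((enorm x)^-1 *: x) else 0%E.

Lemma sph_intE F : sph_int F = (k%:R%:E * iint (GF F))%E.
Proof. by []. Qed.

Lemma GF_ge0 F : (forall u, sphere u -> (0 <= F u)%E) -> forall x, (0 <= GF F x)%E.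
Proof.
move=> F0 x; rewrite /GF; case: ifP => // /andP[xn0 _].
by apply: F0; apply: sphere_normalize.
Qed.

Lemma sph_int_ub F (c : R) : 0 <= c ->
  (forall u, sphere u -> (0 <= F u <= c%:E)%E) ->
  (sph_int F <= (k%:R * (c * 2%:R ^+ k))%:E)%E.
Proof.
move=> c0 Fb.
have F0 : forall u, sphere u -> (0 <= F u)%E by move=> u /Fb /andP[].
rewrite sph_intE EFinM lee_wpmul2l // ?lee_fin ?ler0n //.
rewrite -(iint_box (const_mx (-1)) (_ : 0 < 2%:R) c0) //.
apply: iint_le; first exact: GF_ge0.
move=> x; rewrite /GF; case: ifP => [/andP[xn0 xle]|_]; last first.
  by rewrite lee_fin mulr_ge0 // indicE ler0n.
rewrite indicE mem_set ?mulr1; last first.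
  move=> i; rewrite mxE; have := le_trans (coord_le x i) xle.
  rewrite ler_norml => /andP[h1 h2]; apply/andP; split => //; lra.
by have /andP[] := Fb _ (sphere_normalize xn0).
Qed.

Lemma sph_int_Zle (F1 F2 : 'rV[R]_k -> \bar R) (c : R) : 0 <= c ->
  (forall u, sphere u -> (0 <= F2 u)%E) ->
  (forall u, sphere u -> (0 <= F1 u <= c%:E * F2 u)%E) ->
  (sph_int F1 <= c%:E * sph_int F2)%E.
Proof.
move=> c0 F20 F12.
have F10 : forall u, sphere u -> (0 <= F1 u)%E by move=> u /F12 /andP[].
rewrite !sph_intE muleCA lee_wpmul2l // ?lee_fin ?ler0n //.
apply: le_trans (iint_Zle c0 (GF_ge0 F20)).
apply: iint_le; first exact: GF_ge0.
move=> x; rewrite /GF; case: ifP => [/andP[xn0 xle]|_]; last by rewrite mule0.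
by have /andP[] := F12 _ (sphere_normalize xn0).
Qed.

Lemma enorm_gt0 x : x != 0 -> 0 < enorm x.
Proof.
move=> xn0; rewrite lt_neqAle enorm_ge0 andbT; apply/eqP => /esym /enorm_eq0 h.
by rewrite h eqxx in xn0.
Qed.

Lemma normalize_dist x y : 0 < enorm x -> 0 < enorm y ->
  enorm ((enorm x)^-1 *: x - (enorm y)^-1 *: y) <= 2%:R * enorm (x - y) / enorm y.
Proof.
move=> xp yp.
have -> : (enorm x)^-1 *: x - (enorm y)^-1 *: y
   = (enorm y)^-1 *: (x - y) + ((enorm x)^-1 - (enorm y)^-1) *: x.
  by apply/rowP => i; rewrite !mxE; ring.
apply: le_trans (enorm_triangle _ _) _.
rewrite !enormZ ger0_norm ?invr_ge0 ?enorm_ge0 //.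
set a := enorm x; set b := enorm y; set d := enorm (x - y).
have h1 : `|b - a| <= d.
  rewrite ler_norml; apply/andP; split.
    have := enorm_sub_le x y; rewrite -/a -/b -/d; lra.
  have := enorm_sub_le y x; rewrite -(opprB x y) enormN -/a -/b -/d; lra.
have E : `|a^-1 - b^-1| * a = `|b - a| * b^-1.
  rewrite (_ : a^-1 - b^-1 = (b - a) * (a * b)^-1); last first.
    by field; apply/andP; split; rewrite gt_eqF.
  rewrite normrM (ger0_norm (_ : 0 <= (a * b)^-1)); last first.
    by rewrite invr_ge0 mulr_ge0 // ltW.
  by field; apply/andP; split; rewrite gt_eqF.
rewrite E.
have h2 : `|b - a| * b^-1 <= d * b^-1 by rewrite ler_pM2r ?invr_gt0.
set ib := b^-1 in h2 *.
lra.
Qed.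

Definition sb (eta : R) := 2%:R * (Num.min (1/4%:R) (eta/8%:R) / k%:R).

Lemma sb_gt0 eta : (0 < k)%N -> 0 < eta -> 0 < sb eta.
Proof.
move=> k0 e0; rewrite /sb mulr_gt0 // divr_gt0 ?ltr0n //.
by rewrite lt_min; apply/andP; split; [|rewrite divr_gt0]; rewrite ?ltr0n.
Qed.

Lemma sph_int_lb F (x0 : 'rV[R]_k) (eta C : R) : (0 < k)%N -> sphere x0 ->
  0 < eta -> 0 <= C ->
  (forall u, sphere u -> (0 <= F u)%E) ->
  (forall u, sphere u -> enorm (u - x0) < eta -> (C%:E <= F u)%E) ->
  ((k%:R * (C * sb eta ^+ k))%:E <= sph_int F)%E.
Proof.
move=> k0 sx0 e0 C0 F0 FC.
set mu := Num.min (1/4%:R) (eta/8%:R).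
have mu0 : 0 < mu by rewrite lt_min; apply/andP; split; [|rewrite divr_gt0]; rewrite ?ltr0n.
have mu1 : mu <= 1/4%:R by rewrite ge_min lexx.
have mu2 : mu <= eta/8%:R by rewrite ge_min lexx orbT.
set sig := mu / k%:R.
have sig0 : 0 < sig by rewrite divr_gt0 // ltr0n.
have ksig : k%:R * sig = mu by rewrite /sig mulrC divfK // pnatr_eq0 -lt0n.
set y : 'rV[R]_k := (2%:R)^-1 *: x0.
have ny : enorm y = 2%:R^-1.
  by rewrite enormZ sx0 mulr1 ger0_norm // invr_ge0 ler0n.
set a : 'rV[R]_k := y - const_mx sig.
have sbE : sb eta = 2%:R * sig by [].
rewrite sph_intE EFinM lee_wpmul2l ?lee_fin ?ler0n // sbE.
rewrite -(iint_box a (_ : 0 < 2%:R * sig) C0); last by rewrite mulr_gt0 // ltr0n.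
apply: iint_le; first by move=> x; rewrite lee_fin mulr_ge0 // indicE ler0n.
move=> x; case: (pselect (box a (2%:R * sig) x)) => bx; last first.
  by rewrite indicE (memNset bx) mulr0; apply: GF_ge0.
rewrite indicE mem_set // mulr1.
have dxy : enorm (x - y) <= mu.
  rewrite -ksig; apply: enorm_coord_bound; first exact: ltW.
  move=> i; have := bx i; rewrite /a !mxE => /andP[h1 h2].
  rewrite ler_norml; apply/andP; split; lra.
have xle : enorm x <= 1.
  have := enorm_triangle y (x - y); rewrite addrC subrK ny; lra.
have xge : 4%:R^-1 <= enorm x.
  have := enorm_sub_le y x; rewrite -(opprB x y) enormN ny; lra.
have xn0 : x != 0.
  apply/eqP => x0'; move: xge; rewrite x0' enorm0; apply/negP; rewrite -ltNge.
  by rewrite invr_gt0 ltr0n.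
have xp : 0 < enorm x by apply: enorm_gt0.
rewrite /GF xn0 xle /=; apply: FC; first exact: sphere_normalize.
have x0E : x0 = (enorm y)^-1 *: y.
  by rewrite ny invrK /y scalerA mulfV ?scale1r // pnatr_eq0.
rewrite x0E; apply: le_lt_trans (normalize_dist xp _) _.
  by rewrite ny invr_gt0 ltr0n.
rewrite ny invrK.
have : 2%:R * enorm (x - y) * 2%:R <= 4%:R * mu.
  have := enorm_ge0 (x - y); lra.
lra.
Qed.

End SphInt.

Section Supp.
Variable R : realType.
Variable k : nat.
Implicit Types (x y u v : 'rV[R]_k) (K : set 'rV[R]_k).

Lemma mx_coord_le x i : `|x 0 i| <= `|x|.
Proof.
have /mapP[j Hj ->] : `|x 0 i| \in [seq `|x j.1 j.2| | j : 'I_1 * 'I_k].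
  by apply/mapP; exists (0, i) => //=; rewrite mem_enum.
by rewrite [leRHS]mx_normrE; apply/bigmax_geP; right => /=; exists j.
Qed.

Lemma compact_enorm_bound K : compact K ->
  exists M, 0 <= M /\ forall y, K y -> enorm y <= M.
Proof.
move=> /compact_bounded [M [_ HM]].
have HM' := HM (`|M| + 1) (lt_le_trans (ltr_pwDr ltr01 (ler_norm M)) (lexx _)).
exists (k%:R * (`|M| + 1)); split; first by rewrite mulr_ge0 ?ler0n // addr_ge0.
move=> y Ky; apply: enorm_coord_bound; first by rewrite addr_ge0.
by move=> i; apply: le_trans (mx_coord_le y i) (HM' y Ky).
Qed.

Section WithK.
Variables (K : set 'rV[R]_k) (M : R).
Hypothesis K0 : K 0.
Hypothesis KM : forall y, K y -> enorm y <= M.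

Lemma M_ge0 : 0 <= M.
Proof. by apply: le_trans (KM K0); rewrite enorm0. Qed.

Lemma supp_has_sup x : has_sup [set dotv x y | y in K].
Proof.
split; first by exists (dotv x 0); exists 0.
exists (enorm x * M) => _ [y Ky <-].
apply: le_trans (dotv_le x y) _; by rewrite ler_wpM2l ?enorm_ge0 ?KM.
Qed.

Lemma supp_h_ge x y : K y -> dotv x y <= supp_h K x.
Proof.
move=> Ky; apply: sup_upper_bound; first exact: supp_has_sup.
by exists y.
Qed.

Lemma supp_h_le x c : (forall y, K y -> dotv x y <= c) -> supp_h K x <= c.
Proof.
move=> H; apply: ge_sup; first by exists (dotv x 0); exists 0.
by move=> _ [y Ky <-]; apply: H.
Qed.

Lemma supp_h_ge0 x : 0 <= supp_h K x.
Proof. by have := supp_h_ge x K0; rewrite dotv0r. Qed.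

Lemma supp_h_lip u v : supp_h K u <= supp_h K v + M * enorm (u - v).
Proof.
apply: supp_h_le => y Ky.
have -> : dotv u y = dotv v y + dotv (u - v) y by rewrite dotvBl addrC subrK.
apply: lerD; first exact: supp_h_ge.
apply: le_trans (dotv_le _ _) _.
by rewrite mulrC ler_wpM2r ?enorm_ge0 ?KM.
Qed.

End WithK.
End Supp.

Section Span.
Variable R : realType.
Variable m : nat.
Local Notation V := 'rV[R]_m.+1.
Variable S : set 'M[R]_m.+1.
Hypothesis HS : discrete_subgroup_O S.
Hypothesis Hspan : spanning S.

Let S1 : S 1%:M. Proof. by case: HS. Qed.
Let SM : forall a b, S a -> S b -> S (a *m b). Proof. by case: HS. Qed.
Let Sorth : forall a, S a -> Defs.is_orthogonal a. Proof. by case: HS. Qed.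

Definition orb (a : V) := [set mact phi a | phi in S].

Lemma orb_stable psi a z : S psi -> orb a z -> orb a (mact psi z).
Proof. by move=> Spsi [phi Sphi <-]; exists (psi *m phi); [apply: SM|rewrite mactM]. Qed.

Lemma hull_stable psi a z : S psi -> convhull (orb a) z -> convhull (orb a) (mact psi z).
Proof.
move=> Spsi [p [w [pts [w0 w1 hp ->]]]].
exists p, w, (fun i => mact psi (pts i)); split => //.
  by move=> i; apply: orb_stable.
by rewrite mact_sum.
Qed.

Lemma mxnorm_le_enorm (w : V) : `|w| <= enorm w.
Proof.
rewrite [leLHS]mx_normrE; apply: bigmax_le; first exact: enorm_ge0.
move=> [i j] _ /=; rewrite (_ : i = 0); first exact: coord_le.
by apply/val_inj; case: i => [[]].
Qed.

Lemma interior_ball (A : set V) c : interior A c ->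
  exists2 r, 0 < r & forall w, enorm w < r -> A (c + w).
Proof.
move=> /nbhs_ballP [r r0 H]; exists r => // w hw; apply: H.
rewrite -ball_normE /ball_ /= opprD addrA subrr add0r normrN.
exact: le_lt_trans (mxnorm_le_enorm w) hw.
Qed.

Lemma interior_singleton (b c : V) : ~ interior [set b] c.
Proof.
move=> /interior_ball [r r0 H].
set t := r / 2%:R / m.+1%:R.
have t0 : 0 < t by rewrite /t !divr_gt0 ?ltr0n.
have h1 := H 0; rewrite enorm0 addr0 in h1; have {h1} cb := h1 r0.
have h2 : enorm (const_mx t : V) < r.
  have hb : enorm (const_mx t : V) <= m.+1%:R * t.
    apply: enorm_coord_bound; first exact: ltW.
    by move=> i; rewrite mxE ger0_norm // ltW.
  have ht : m.+1%:R * t = r / 2%:R by rewrite /t mulrC divfK // pnatr_eq0.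
  rewrite ht in hb; lra.
have := H _ h2; rewrite cb => /(congr1 (fun v : V => v 0 0)).
rewrite !mxE => h; move: h; lra.
Qed.

Lemma convhull_singleton (b z : V) : convhull [set b] z -> z = b.
Proof.
move=> [p [w [pts [w0 w1 hp ->]]]].
rewrite (eq_bigr (fun i => w i *: b)); last by move=> i _; rewrite (hp i).
by rewrite -scaler_suml w1 scale1r.
Qed.

Lemma mact_inj phi : S phi -> injective (mact phi).
Proof.
move=> Sphi x y h.
have /mulmx1C O := Sorth Sphi.
have : mact phi x *m phi = mact phi y *m phi by rewrite h.
by rewrite /mact -!mulmxA O !mulmx1.
Qed.

Lemma orbit_nonneg (b : V) : sphere b -> forall x : V,
  exists psi, S psi /\ 0 <= dotv x (mact psi b).
Proof.
move=> sb x.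
have [fin _] := Hspan sb.
have [s0 Es0] := (finite_seqP _).1 fin.
set s := undup s0.
have Es : forall v, orb b v <-> v \in s.
  by move=> v; rewrite mem_undup /orb Es0.
have us : uniq s by apply: undup_uniq.
set sig := \sum_(v <- s) v.
have fix_sig : forall phi, S phi -> mact phi sig = sig.
  move=> phi Sphi.
  have pe : perm_eq (map (mact phi) s) s.
    apply: uniq_perm => //; first by rewrite map_inj_uniq //; exact: mact_inj.
    apply: (uniq_min_size _ _ _).2; first by rewrite map_inj_uniq //; exact: mact_inj.
      move=> v /mapP[u us' ->]; apply/Es; apply: orb_stable => //; exact/Es.
    by rewrite size_map.
  transitivity (\sum_(v <- map (mact phi) s) v); last exact: (perm_big _ pe).
  by rewrite big_map /sig /mact mulmx_suml.
have sig0 : sig = 0.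
  apply: contrapT => /eqP sn0.
  set b' := (enorm sig)^-1 *: sig.
  have sb' := sphere_normalize sn0.
  have [_ [c hc]] := Hspan sb'.
  have Ob : orb b' = [set b'].
    apply/seteqP; split.
      by move=> _ [phi Sphi <-] /=; rewrite /b' mactZ fix_sig.
    by move=> _ ->; exists 1%:M => //; rewrite mact1.
  have hc2 : interior (convhull (orb b')) c := hc.
  rewrite Ob in hc2.
  have hc' : interior [set b'] c.
    apply: filterS hc2 => z /convhull_singleton ->; done.
  exact: interior_singleton hc'.
have ds : \sum_(v <- s) dotv x v = 0.
  suff -> : \sum_(v <- s) dotv x v = dotv x sig by rewrite sig0 dotv0r.
  rewrite /sig; elim: s {us Es fix_sig sig0 sig} => [|v s IH].
    by rewrite !big_nil dotv0r.
  by rewrite !big_cons dotvDr IH.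
have bs : b \in s by apply/Es; exists 1%:M => //; rewrite mact1.
case: (pselect (exists2 v, v \in s & 0 <= dotv x v)) => [[v vs hv]|hn].
  by have [psi Spsi hpv] := (Es v).2 vs; exists psi; rewrite hpv.
exfalso.
have neg : forall v, v \in s -> dotv x v < 0.
  move=> v vs; rewrite ltNge; apply/negP => h; apply: hn; by exists v.
have : \sum_(v <- s) dotv x v < 0.
  elim: s {Es us fix_sig sig0 sig ds hn} bs neg => [//|v s IH] bs neg.
  rewrite big_cons.
  have hv := neg v (mem_head _ _).
  have neg' : forall u, u \in s -> dotv x u < 0.
    by move=> u us'; apply: neg; rewrite in_cons us' orbT.
  case: (boolP (b \in s)) => bs'.
    by have := IH bs' neg'; lra.
  have : \sum_(j <- s) dotv x j <= 0.
    by rewrite big_seq; apply: sumr_le0 => u /neg' /ltW.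
  lra.
by rewrite ds ltxx.
Qed.

Lemma span_delta a : sphere a -> exists d, 0 < d /\
  forall x, sphere x -> exists phi, S phi /\ d <= dotv x (mact phi a).
Proof.
move=> sa; have [_ [c hc]] := Hspan sa.
have [r r0 Hr] := interior_ball hc.
exists (r / 4%:R); split; first by rewrite divr_gt0 // ltr0n.
move=> x sx.
have [psi [Spsi hpsi]] : exists psi, S psi /\ 0 <= dotv x (mact psi c).
  have [->|cn0] := eqVneq c 0.
    by exists 1%:M; split => //; rewrite mact1 dotv0r.
  have [psi [Spsi h]] := orbit_nonneg (sphere_normalize cn0) x.
  exists psi; split => //.
  have -> : c = enorm c *: ((enorm c)^-1 *: c).
    by rewrite scalerA mulfV ?scale1r // gt_eqF // enorm_gt0.
  by rewrite mactZ dotvZr mulr_ge0 // enorm_ge0.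
have ox := Sorth Spsi.
set w : V := (r / 2%:R) *: (x *m psi).
have nw : enorm w < r.
  rewrite /w enormZ /enorm orth_dot_mulmx // -/(enorm x) sx mulr1.
  rewrite ger0_norm ?divr_ge0 ?ltW ?ltr0n //; lra.
have := hull_stable Spsi (Hr _ nw).
rewrite mactD /w mactZ mact_mulmx //.
move=> [p [wt [pts [w0 w1 hp E]]]].
have dx : dotv x x = 1 by rewrite -enorm_sq sx expr1n.
have hz : r / 2%:R <= \sum_(i < p) wt i * dotv x (pts i).
  rewrite -dotv_sumr -E dotvDr dotvZr dx mulr1; lra.
case: (pselect (exists i, r / 4%:R <= dotv x (pts i))) => [[i hi]|hn].
  have [phi Sphi hphi] := hp i; exists phi; split => //; by rewrite hphi.
exfalso.
have : \sum_(i < p) wt i * dotv x (pts i) <= \sum_(i < p) wt i * (r / 4%:R).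
  apply: ler_sum => i _; apply: ler_wpM2l => //.
  rewrite leNgt; apply/negP => h; apply: hn; exists i; exact: ltW.
rewrite -mulr_suml w1 mul1r; lra.
Qed.

End Span.

Section Unif.
Variable R : realType.
Variable m : nat.
Local Notation V := 'rV[R]_m.+1.

Lemma ball_enorm (a b : V) r : ball a r b -> enorm (b - a) <= m.+1%:R * r.
Proof.
rewrite -ball_normE /ball_ /= => h.
have r0 : 0 <= r by apply: le_trans (normr_ge0 _) (ltW h).
apply: enorm_coord_bound => // i.
by apply: le_trans (mx_coord_le _ i) _; rewrite distrC ltW.
Qed.

Lemma sphere_closed : closed (@sphere R m.+1).
Proof.
rewrite -[X in closed X]setCK; apply: open_closedC; rewrite openE => v nv.
rewrite /interior; apply/nbhs_ballP.
have d0 : 0 < `|enorm v - 1| / (2%:R * m.+1%:R).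
  rewrite divr_gt0 ?mulr_gt0 ?ltr0n // normr_gt0 subr_eq0; apply/eqP => h; exact: nv.
exists (`|enorm v - 1| / (2%:R * m.+1%:R)) => // w hw sw.
have := ball_enorm hw.
have -> : m.+1%:R * (`|enorm v - 1| / (2%:R * m.+1%:R)) = `|enorm v - 1| / 2%:R.
  by field; rewrite ?pnatr_eq0 // ?mulf_neq0 ?pnatr_eq0.
move=> hle.
have np : 0 < `|enorm v - 1|.
  rewrite normr_gt0 subr_eq0; apply/eqP => h; exact: nv.
have h1 := enorm_sub_le w v; have h2 := enorm_sub_le v w.
rewrite -(opprB w v) enormN in h2.
rewrite /sphere /= in sw; rewrite sw in h1 h2.
have := normr_ge0 (enorm v - 1).
case: (lerP 0 (enorm v - 1)) => h.
  by rewrite ger0_norm // in hle np; lra.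
by rewrite ltr0_norm // in hle np; lra.
Qed.

Lemma sphere_compact : compact (@sphere R m.+1).
Proof.
apply: bounded_closed_compact; last exact: sphere_closed.
exists 1; split; first exact: num_real.
move=> M M1 x sx; apply: le_trans (mxnorm_le_enorm x) _.
by rewrite sx ltW.
Qed.

Variable S : set 'M[R]_m.+1.
Hypothesis HS : discrete_subgroup_O S.
Hypothesis Hspan : spanning S.

Definition Pd (a : V) d :=
  forall x, sphere x -> exists phi, S phi /\ d <= dotv x (mact phi a).

Lemma Pd_mono a d d' : Pd a d -> d' <= d -> Pd a d'.
Proof.
move=> h dd x sx; have [phi [Sphi hp]] := h x sx; exists phi; split => //.
exact: le_trans hp.
Qed.

Lemma Pd_lip a a' d : Pd a d -> enorm (a' - a) <= d / 2%:R -> Pd a' (d / 2%:R).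
Proof.
move=> h ha x sx; have [phi [Sphi hp]] := h x sx; exists phi; split => //.
have Sorth : Defs.is_orthogonal phi by case: HS => _ _ _ /(_ _ Sphi).
have -> : a' = a + (a' - a) by rewrite addrC subrK.
rewrite mactD dotvDr.
have := dotv_le x (- mact phi (a' - a)).
rewrite dotvNr enormN enorm_mact // sx mul1r; lra.
Qed.

Lemma uniform_delta : exists rho, 0 < rho /\ forall a, sphere a -> Pd a rho.
Proof.
have hd : forall a : V, exists d, sphere a -> 0 < d /\ Pd a d.
  move=> a; case: (pselect (sphere a)) => sa.
    have [d [d0 hd]] := span_delta HS Hspan sa; by exists d.
  by exists 1.
have [dl Hdl] := boolp.choice hd.
have cc : cover_compact (@sphere R m.+1) by rewrite -compact_cover; exact: sphere_compact.
have := cc V (@sphere R m.+1) (fun a => ball a (dl a / (2%:R * m.+1%:R))).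
case.
- by move=> a _; apply: ball_open.
- move=> a sa; exists a => //; apply: ballxx.
  by have [d0 _] := Hdl a sa; rewrite divr_gt0 // mulr_gt0 ?ltr0n.
move=> D' DS cov.
set s : seq V := finmap.enum_fset D'.
have Hs : forall a, a \in s -> sphere a by move=> a /DS; rewrite inE.
exists (\big[Num.min/1]_(a <- s) (dl a / 2%:R)); split.
  elim: s Hs => [|a s IH] Hs; first by rewrite big_nil ltr01.
  rewrite big_cons lt_min IH ?andbT.
    by have [d0 _] := Hdl a (Hs a (mem_head _ _)); rewrite divr_gt0 ?ltr0n.
  by move=> b bs; apply: Hs; rewrite in_cons bs orbT.
move=> b sb.
have [a aD bb] := cov b sb.
have aS : a \in s by [].
have sa := Hs a aS.
have [d0 Pa] := Hdl a sa.
have hb : enorm (b - a) <= dl a / 2%:R.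
  apply: le_trans (ball_enorm bb) _.
  rewrite le_eqVlt; apply/orP; left; apply/eqP; field; rewrite ?pnatr_eq0 // ?mulf_neq0 ?pnatr_eq0.
apply: Pd_mono (Pd_lip Pa hb) _.
elim: s aS {Hs cov} => [//|c s IH] aS.
rewrite big_cons; move: aS; rewrite in_cons => /orP[/eqP ->|hs].
  by rewrite ge_min lexx.
by rewrite ge_min IH ?orbT.
Qed.

End Unif.

Section Pow.
Variable R : realType.

Lemma powR_anti (a b p : R) : 0 < a -> a <= b -> p <= 0 -> b `^ p <= a `^ p.
Proof.
move=> a0 ab p0; have b0 : 0 < b by apply: lt_le_trans ab.
rewrite /powR !gt_eqF // ler_expR ler_wnM2l // ler_ln ?posrE //.
Qed.

Lemma powR_lt1 (c p : R) : 1 < c -> p < 0 -> c `^ p < 1.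
Proof.
move=> c1 p0; rewrite /powR gt_eqF ?(lt_trans ltr01) // -expR0 ltr_expR.
by rewrite nmulr_rlt0 // ln_gt0.
Qed.

Lemma powR_big (q A p : R) : 0 < q < 1 -> 0 < A -> p < ln A / ln q -> A < q `^ p.
Proof.
move=> /andP[q0 q1] A0 hp; have lq : ln q < 0 by apply: ln_lt0; rewrite q0 q1.
rewrite /powR gt_eqF // -{1}(lnK (A0 : A \in Num.pos)) ltr_expR.
by have := hp; rewrite -(ltr_nM2r lq) divfK ?lt_eqF.
Qed.

End Pow.

Section Main.
Variable R : realType.
Variable m : nat.
Local Notation V := 'rV[R]_m.+1.
Variables (S : set 'M[R]_m.+1) (f : V -> R) (c1 c2 : R).
Hypothesis HS : discrete_subgroup_O S.
Hypothesis Hspan : spanning S.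
Hypothesis c1p : 0 < c1.
Hypothesis c2p : 0 < c2.
Hypothesis fb : forall x, sphere x -> c1 <= f x <= c2.

Let f0 x : sphere x -> 0 <= f x.
Proof. by move=> /fb /andP[h _]; apply: le_trans h; apply: ltW. Qed.

Definition Itot := sph_int (fun x : V => (f x)%:E).

Lemma sphere_pt : exists b : V, sphere b.
Proof.
have cn0 : (const_mx 1 : V) != 0.
  apply/eqP => /(congr1 (fun v : V => v 0 0)); rewrite !mxE => /eqP.
  by rewrite oner_eq0.
by exists ((enorm (const_mx 1 : V))^-1 *: const_mx 1); apply: sphere_normalize.
Qed.

Lemma Itot_ub : (Itot <= (m.+1%:R * (c2 * 2%:R ^+ m.+1))%:E)%E.
Proof.
apply: sph_int_ub; first exact: ltW.
move=> u su; rewrite !lee_fin; have /andP[_ h] := fb su; by rewrite h f0.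
Qed.

Lemma Itot_real : exists r, 0 < r /\ Itot = r%:E.
Proof.
have [b sbb] := sphere_pt.
have lb := @sph_int_lb R m.+1 (fun x => (f x)%:E) b 1 c1 (ltn0Sn _) sbb ltr01 (ltW c1p).
have := lb (fun u su => f0 su) (fun u su _ => (proj1 (andP (fb su)))).
rewrite -/Itot => h1.
have h2 := Itot_ub.
have pos : 0 < m.+1%:R * (c1 * sb m.+1 1 ^+ m.+1).
  by rewrite mulr_gt0 ?ltr0n // mulr_gt0 // exprn_gt0 // sb_gt0.
move: h1 h2; case: Itot => [r| |] //= h1 h2.
exists r; split => //; rewrite lee_fin in h1; exact: lt_le_trans pos h1.
Qed.

Lemma no_big_h (K : set V) p c : Kp S f p K -> p < 0 -> 1 < c ->
  (forall u, sphere u -> c <= supp_h K u) -> False.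
Proof.
move=> [[cK _ _] Kinv K0 Heq] p0 c1' Hc.
have [r [r0 Ir]] := Itot_real.
have c0 : 0 < c by apply: lt_trans c1'.
have := @sph_int_Zle R m.+1 (fun x => ((f x)%:E * powe (supp_h K x) p)%E)
  (fun x => (f x)%:E) (c `^ p) (powR_ge0 _ _).
move=> /(_ (fun u su => f0 su)).
have H : forall u, sphere u -> (0 <= (f u)%:E * powe (supp_h K u) p <= (c `^ p)%:E * (f u)%:E)%E.
  move=> u su; have hu := Hc u su; have hp : 0 < supp_h K u by apply: lt_le_trans hu.
  rewrite /powe hp -EFinM !lee_fin mulr_ge0 ?f0 ?powR_ge0 //=.
  by rewrite mulrC ler_wpM2r ?f0 // powR_anti // ltW.
move=> /(_ H); rewrite Heq -/Itot Ir -EFinM lee_fin.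
have := powR_lt1 c1' p0.
move=> h1 h2; have : r <= c `^ p * r := h2.
have : c `^ p * r < r by rewrite -[X in _ < X]mul1r ltr_pM2r.
lra.
Qed.

Lemma K_bound (rho : R) (K : set V) p : 0 < rho -> (forall a, sphere a -> Pd S a rho) ->
  Kp S f p K -> p < 0 -> forall y, K y -> enorm y * rho <= 1.
Proof.
move=> rho0 Hrho hK p0 y Ky; rewrite leNgt; apply/negP => hy.
have yn0 : y != 0.
  apply/eqP => y0; move: hy; rewrite y0 enorm0 mul0r; apply/negP; rewrite -leNgt ler01 //.
have [[cK _ _] Kinv K0 _] := hK.
have [M [M0 KM]] := compact_enorm_bound cK.
apply: (no_big_h hK p0 hy) => u su.
have [phi [Sphi hphi]] := Hrho _ (sphere_normalize yn0) u su.
have Kphi : K (mact phi y) by rewrite -(Kinv phi Sphi); exists y.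
apply: le_trans (supp_h_ge K0 KM u Kphi).
have E : mact phi y = enorm y *: mact phi ((enorm y)^-1 *: y).
  by rewrite mactZ scalerA mulfV ?scale1r // gt_eqF // enorm_gt0.
by rewrite E dotvZr ler_wpM2l // enorm_ge0.
Qed.

Section WithRho.
Variable rho : R.
Hypothesis rho0 : 0 < rho.
Hypothesis Hrho : forall a, sphere a -> Pd S a rho.
Variables (K : set V) (p : R).
Hypothesis hK : Kp S f p K.
Hypothesis p0 : p < 0.

Let K0 : K 0. Proof. by case: hK. Qed.
Let KM : forall y, K y -> enorm y <= rho^-1.
Proof.
move=> y Ky; have := K_bound rho0 Hrho hK p0 Ky.
by rewrite -ler_pdivlMr // mul1r.
Qed.

Let Eset := [set supp_h K x | x in @sphere R m.+1].

Let Ehas : has_inf Eset.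
Proof.
split; first by have [b sb0] := sphere_pt; exists (supp_h K b); exists b.
by exists 0 => _ [x _ <-]; apply: supp_h_ge0 K0 KM x.
Qed.

Lemma min_le1 : sph_min (supp_h K) <= 1.
Proof.
rewrite leNgt; apply/negP => h.
apply: (no_big_h hK p0 h) => u su.
by apply: (ge_inf Ehas.2); exists u.
Qed.

Lemma min_lb (eps : R) : 0 < eps < 1 ->
  p < ln (c2 * 2%:R ^+ m.+1 / (c1 * sb m.+1 (eps * rho / 2%:R) ^+ m.+1)) / ln (1 - eps) ->
  1 - 2%:R * eps < sph_min (supp_h K).
Proof.
move=> /andP[e0 e1] hp.
set q := 1 - eps.
set eta := eps * rho / 2%:R.
have eta0 : 0 < eta by rewrite /eta divr_gt0 ?mulr_gt0 ?ltr0n.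
set s := sb m.+1 eta.
have s0 : 0 < s by apply: sb_gt0.
set A := c2 * 2%:R ^+ m.+1 / (c1 * s ^+ m.+1).
have A0 : 0 < A by rewrite /A divr_gt0 ?mulr_gt0 ?exprn_gt0 ?ltr0n.
have q01 : 0 < q < 1 by rewrite /q; apply/andP; split; lra.
have bigq := powR_big q01 A0 hp.
rewrite ltNge; apply/negP => hm.
set m0 := sph_min (supp_h K) in hm.
have e2 : 0 < eps / 2%:R by rewrite divr_gt0 ?ltr0n.
have [_ [x0 sx0 <-] hx0] := inf_adherent e2 Ehas.
rewrite -/(sph_min (supp_h K)) -/m0 in hx0.
have hq : forall u, sphere u -> enorm (u - x0) < eta -> supp_h K u <= q.
  move=> u su hu; have := supp_h_lip K0 KM u x0.
  have : rho^-1 * enorm (u - x0) <= rho^-1 * eta by rewrite ler_wpM2l ?invr_ge0 ?ltW // ltW.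
  have -> : rho^-1 * eta = eps / 2%:R by rewrite /eta; field; rewrite gt_eqF.
  rewrite /q; lra.
have [r [r0 Ir]] := Itot_real.
have [_ _ _ Heq] := hK.
have lb := @sph_int_lb R m.+1 (fun x => ((f x)%:E * powe (supp_h K x) p)%E) x0 eta
  (c1 * q `^ p) (ltn0Sn _) sx0 eta0 (mulr_ge0 (ltW c1p) (powR_ge0 _ _)).
have hF0 : forall u, sphere u -> (0 <= (f u)%:E * powe (supp_h K u) p)%E.
  move=> u su; rewrite /powe; case: ifP => _.
    by rewrite -EFinM lee_fin mulr_ge0 ?f0 ?powR_ge0.
  by rewrite mule_ge0 ?leey // lee_fin f0.
have hFC : forall u, sphere u -> enorm (u - x0) < eta ->
    ((c1 * q `^ p)%:E <= (f u)%:E * powe (supp_h K u) p)%E.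
  move=> u su hu; have hqu := hq u su hu.
  rewrite /powe; case: ifP => hpos.
    rewrite -EFinM lee_fin.
    have c1f : c1 <= f u by have /andP[] := fb su.
    have qp : q `^ p <= supp_h K u `^ p by apply: powR_anti => //; exact: ltW.
    apply: ler_pM => //; [exact: ltW | exact: powR_ge0].
  have fp : 0 < f u by have /andP[h _] := fb su; apply: lt_le_trans h.
  by rewrite gt0_muley ?lte_fin // leey.
have := lb hF0 hFC.
rewrite Heq -/Itot => h1; have h2 := Itot_ub.
rewrite Ir lee_fin in h1; rewrite Ir lee_fin in h2.
have h3 := le_trans h1 h2.
rewrite ler_pM2l ?ltr0n // in h3.
have h4 : q `^ p <= A.
  rewrite /A ler_pdivlMr ?mulr_gt0 ?exprn_gt0 //.
  by move: h3; rewrite -/s mulrCA mulrA.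
by move: bigq; rewrite ltNge h4.
Qed.

End WithRho.

End Main.

Theorem corollary3p1 (R : realType) (n : nat) (S : set 'M[R]_(n.+1))
    (f : 'rV[R]_(n.+1) -> R) (c1 c2 : R) (Om : R -> set 'rV[R]_(n.+1)) :
  (1 <= n)%N ->
  discrete_subgroup_O S ->
  spanning S ->
  S_invariant_fun S f ->
  sphere_measurable f ->
  0 < c1 -> 0 < c2 ->
  (forall x, sphere x -> c1 <= f x <= c2) ->
  (forall p : R, p < - (n.+1)%:R -> V_maximizer S f p (Om p)) ->
  (fun p : R => sph_min (supp_h (Om p))) @ -oo --> (1 : R).
Proof.
move=> n1 HS Hspan _ _ c1p c2p fb HOm.
have [rho [rho0 Hrho]] := uniform_delta HS Hspan.
apply/cvgrPdist_lt => e e0.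
set eps := Num.min (e / 4%:R) (1 / 4%:R).
have eps0 : 0 < eps by rewrite lt_min !divr_gt0 ?ltr0n.
have eps1 : eps <= 1 / 4%:R by rewrite ge_min lexx orbT.
have epse : eps <= e / 4%:R by rewrite ge_min lexx.
set P := Num.min (- (n.+1)%:R)
  (ln (c2 * 2%:R ^+ n.+1 / (c1 * sb n.+1 (eps * rho / 2%:R) ^+ n.+1)) / ln (1 - eps)).
exists P; split; first exact: num_real.
move=> p hp.
have hp1 : p < - (n.+1)%:R by apply: lt_le_trans hp _; rewrite ge_min lexx.
have hp2 : p < ln (c2 * 2%:R ^+ n.+1 / (c1 * sb n.+1 (eps * rho / 2%:R) ^+ n.+1)) / ln (1 - eps).
  by apply: lt_le_trans hp _; rewrite ge_min lexx orbT.
have p0 : p < 0 by apply: lt_trans hp1 _; rewrite oppr_lt0 ltr0n.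
have [hK _] := HOm p hp1.
have h1 := min_le1 c1p c2p fb rho0 Hrho hK p0.
have e01 : 0 < eps < 1 by apply/andP; split => //; lra.
have h2 := min_lb c1p c2p fb rho0 Hrho hK p0 e01 hp2.
rewrite ger0_norm; last by rewrite subr_ge0.
lra.
Qed.
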